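(* Let $X$, $Y_k$ ($k\in\mathbb N$) and norms $\|\cdot\|_{X\oplus Y_k}$ be as in the generalized $\ell^2$-sum setting. Then $\Lambda(X\oplus Y_k)$ is compact in the weak$^*$ topology of the dual of $(\Sigma(X\oplus Y_k),\|\cdot\|_\Sigma)$.
   Context: Setting: $(X,\|\cdot\|_X)$ and $(Y_k,\|\cdot\|_{Y_k})$, $k\in\mathbb N$, are Banach spaces; for each $k$, $\|\cdot\|_{X\oplus Y_k}$ is a norm on $X\oplus Y_k$ coinciding with $\|\cdot\|_X$ on $X$ and with $\|\cdot\|_{Y_k}$ on $Y_k$, and monotone: $\|x+y_k\|_{X\oplus Y_k}\ge\|x\|_X$. Duals of direct sums are identified with direct sums of duals via $(x^*+y^* )(x+y)=x^*(x)+y^*(y)$. $\Lambda(X\oplus Y_k)$ is the set of functionals $x^*+\sum_k\alpha_ky_k^*$ (acting by $x+\sum y_k\mapsto x^*(x)+\sum\alpha_ky_k^*(y_k)$) with $x^*\in X^*$, $y_k^*\in Y_k^*$, $\|x^*+y_k^*\|_{X\oplus Y_k}\le1$ for all $k$, $0\le\alpha_k\le1$, $\sum\alpha_k^2\le1$. $\Sigma(X\oplus Y_k)=\{x+y_1+y_2+\dots:x\in X,y_k\in Y_k,\sum\|y_k\|_{Y_k}^2<\infty\}$ with $\|z\|_\Sigma=\sup\{|z^*(z)|:z^*\in\Lambda(X\oplus Y_k)\}$. *)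

(* Defs.v *)
From HB Require Import structures.
From mathcomp Require Import all_boot all_order all_algebra.
From mathcomp Require Import all_classical all_reals all_analysis.
Set Implicit Arguments. Unset Strict Implicit. Unset Printing Implicit Defensive.
Import Order.TTheory GRing.Theory Num.Theory.
Import numFieldNormedType.Exports.
Local Open Scope classical_set_scope.
Local Open Scope ring_scope.

Section L2Sum.
Variables (R : realType) (X : completeNormedModType R)
          (Y : nat -> completeNormedModType R).

Definition is_dual (V : normedModType R) (f : V -> R) : Prop :=
  (forall (a : R) (u v : V), f (a *: u + v) = a * f u + f v) /\ continuous f.

(* [N k x y] is ||x + y||_{X (+) Y_k}: a norm on X (+) Y_k that coincides with
   ||.||_X on X and ||.||_{Y_k} on Y_k, and is monotone. *)
Definition l2sum_norms (N : forall k, X -> Y k -> R) : Prop :=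
  forall k,
    [/\ (forall x1 x2 y1 y2, N k (x1 + x2) (y1 + y2) <= N k x1 y1 + N k x2 y2),
        (forall (a : R) x y, N k (a *: x) (a *: y) = `|a| * N k x y),
        (forall x y, N k x y = 0 -> x = 0 /\ y = 0) &
        [/\ (forall x, N k x 0 = `|x|),
             (forall y, N k 0 y = `|y|) &
             (forall x y, `|x| <= N k x y)]].

(* The underlying set of Sigma(X (+) Y_k): x + y_1 + y_2 + ... with
   sum ||y_k||^2 < oo. *)
Definition Sigma : Type :=
  {z : X * (forall k, Y k) | cvgn (series (fun k => `|z.2 k| ^+ 2))}.

Definition sig_x (z : Sigma) : X := (proj1_sig z).1.
Definition sig_y (z : Sigma) (k : nat) : Y k := (proj1_sig z).2 k.

(* ||x^* + y_k^*||_{(X (+) Y_k)^*} <= 1, i.e. the dual norm is at most one: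
   |x^*(x) + y^*(y)| <= ||x + y||_{X (+) Y_k} for all x, y. *)
Definition dual_norm_le1 (N : forall k, X -> Y k -> R) k
    (xs : X -> R) (ys : Y k -> R) : Prop :=
  forall x y, `|xs x + ys y| <= N k x y.

Definition Lambda (N : forall k, X -> Y k -> R) : set (Sigma -> R) :=
  [set f | exists (xs : X -> R) (ys : forall k, Y k -> R) (al : nat -> R),
     [/\ is_dual xs,
         (forall k, is_dual (ys k)),
         (forall k, dual_norm_le1 N (xs) (ys k)),
         (forall k, 0 <= al k <= 1) /\
         cvgn (series (fun k => al k ^+ 2)) /\
           limn (series (fun k => al k ^+ 2)) <= 1 &
         f = fun z => xs (sig_x z) + limn (series (fun k => al k * ys k (sig_y z k)))]].

Definition sigma_norm (N : forall k, X -> Y k -> R) (z : Sigma) : R :=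
  sup [set `|f z| | f in Lambda N].

Definition sig_lincomb (a : R) (z1 z2 z3 : Sigma) : Prop :=
  sig_x z3 = a *: sig_x z1 + sig_x z2 /\
  forall k, sig_y z3 k = a *: sig_y z1 k + sig_y z2 k.

Definition sigma_dual (N : forall k, X -> Y k -> R) : set (Sigma -> R) :=
  [set f | (forall a z1 z2 z3, sig_lincomb a z1 z2 z3 -> f z3 = a * f z1 + f z2)
           /\ exists C : R, forall z, `|f z| <= C * sigma_norm N z].

End L2Sum.

(* Main.v *)
Require Import Defs.
From HB Require Import structures.
From mathcomp Require Import all_boot all_order all_algebra.
From mathcomp Require Import all_classical all_reals all_analysis.
From mathcomp Require Import ring lra.
Import Order.TTheory GRing.Theory Num.Theory.
Import numFieldNormedType.Exports.
Local Open Scope classical_set_scope.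
Local Open Scope ring_scope.
Set Implicit Arguments. Unset Strict Implicit. Unset Printing Implicit Defensive.

Section Gen.
Variable R : realType.

Lemma ultra_bnd_cvg (T : Type) (F : set_system T) (g : T -> R) (a b : R) :
  UltraFilter F -> F [set t | a <= g t <= b] -> cvg (g @ F).
Proof.
move=> FU Fab; have FF : ProperFilter F := @ultra_proper _ _ FU.
have PG : ProperFilter (g @ F) by apply: fmap_proper_filter.
have Gab : F (g @^-1` `[a, b]%classic).
  by apply: filterS Fab => t h /=; rewrite in_itv.
have [c [_ cc]] := segment_compact PG Gab.
apply/cvg_ex; exists c => B Bc.
case: (in_ultra_setVsetC (g @^-1` B) FU) => // FnB.
have [x [nBx Bx]] : (~` B `&` B) !=set0 := cc (~` B) B FnB Bc.
by case: nBx.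
Qed.

Definition islin (V : normedModType R) (f : V -> R) :=
  forall (a : R) (u v : V), f (a *: u + v) = a * f u + f v.

Lemma lin_add (V : normedModType R) (f : V -> R) : islin f ->
  forall u v, f (u + v) = f u + f v.
Proof. by move=> h u v; rewrite -[u]scale1r h mul1r scale1r. Qed.

Lemma lin0 (V : normedModType R) (f : V -> R) : islin f -> f 0 = 0.
Proof.
move=> h; have := congr1 (fun t => t - f 0) (lin_add h 0 0).
by rewrite /= addr0 subrr addrK.
Qed.

Lemma lin_scale (V : normedModType R) (f : V -> R) : islin f ->
  forall a u, f (a *: u) = a * f u.
Proof. by move=> h a u; have := h a u 0; rewrite addr0 lin0 // addr0. Qed.

Lemma lin_sub (V : normedModType R) (f : V -> R) : islin f ->
  forall u v, f (u - v) = f u - f v.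
Proof. by move=> h u v; rewrite lin_add // -scaleN1r lin_scale // mulN1r. Qed.

Lemma lin_cont (V : normedModType R) (f : V -> R) :
  islin f -> (forall u, `|f u| <= `|u|) -> continuous f.
Proof.
move=> hl hb x; apply/cvgrPdist_le => e e0.
have : \forall y \near x, `|x - y| <= e.
  exact: (@cvgr_dist_le _ _ _ (nbhs x) _ (fun y : V => y) x cvg_id e e0).
apply: filterS => y hy; rewrite -lin_sub //; exact: le_trans (hb _) hy.
Qed.

Lemma series_mono (u : nat -> R) : (forall k, 0 <= u k) ->
  forall m n, (m <= n)%N -> series u m <= series u n.
Proof.
move=> u0 m n mn; rewrite -subr_ge0 sub_series_geq //; exact: sumr_ge0.
Qed.

Lemma series_le_lim (u : nat -> R) : (forall k, 0 <= u k) -> cvgn (series u) ->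
  forall n, series u n <= limn (series u).
Proof.
move=> u0 cu n; apply: nondecreasing_cvgn_le => //.
by apply/nondecreasing_seqP => k; apply: series_mono => //.
Qed.

Lemma amgm (t a u : R) : 0 < t -> 0 <= a -> 0 <= u ->
  a * u <= (t * a ^+ 2 + u ^+ 2 / t) / 2.
Proof.
move=> t0 a0 u0.
have s0 : 0 < t^-1 by rewrite invr_gt0.
have ts : t * t^-1 = 1 by rewrite mulfV // gt_eqF.
rewrite /= -[u ^+ 2 / t]/(u ^+ 2 * t^-1).
set s := t^-1 in s0 ts *.
have h : 0 <= (t * a - u) ^+ 2 * s by apply: mulr_ge0; [exact: sqr_ge0|exact: ltW].
have e : (t * a - u) ^+ 2 * s = t * (t * s) * a ^+ 2 - 2 * (t * s) * (a * u) + u ^+ 2 * s.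
  by ring.
rewrite e ts !mulr1 in h.
lra.
Qed.

Lemma tail_bound (a u c : nat -> R) :
  (forall k, 0 <= a k) -> cvgn (series (fun k => a k ^+ 2)) ->
  limn (series (fun k => a k ^+ 2)) <= 1 ->
  (forall k, 0 <= u k) -> cvgn (series (fun k => u k ^+ 2)) ->
  (forall k, `|c k| <= a k * u k) ->
  cvgn (series c) /\ forall n t, 0 < t ->
   `|limn (series c) - series c n| <=
     t / 2 + (limn (series (fun k => u k ^+ 2)) - series (fun k => u k ^+ 2) n) / (2 * t).
Proof.
move=> a0 ca la1 u0 cu hc.
have cc : cvgn (series c).
  apply: normed_cvg.
  have -> : [normed series c] = series (fun k => `|c k|) by [].
  apply: (@series_le_cvg _ _ (fun k => a k ^+ 2 + u k ^+ 2)).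
  - by move=> k.
  - by move=> k; apply: addr_ge0; exact: sqr_ge0.
  - move=> k; apply: le_trans (hc k) _.
    have := amgm ltr01 (a0 k) (u0 k); rewrite mul1r invr1 mulr1 => h.
    apply: le_trans h _.
    have hs : 0 <= a k ^+ 2 + u k ^+ 2 by apply: addr_ge0; exact: sqr_ge0.
    lra.
  - have -> : (fun k => a k ^+ 2 + u k ^+ 2) = (fun k => a k ^+ 2) + (fun k => u k ^+ 2) by [].
    exact: is_cvg_seriesD.
split => // n t t0.
apply: (@cvgr_to_le nat \oo _ R (fun m => `|series c m - series c n|)).
  apply: cvg_norm; apply: cvgB => //; exact: cvg_cst.
near=> m.
have nm : (n <= m)%N by near: m; exact: nbhs_infty_ge.
rewrite sub_series_geq //.
apply: le_trans (ler_norm_sum _ _ _) _.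
apply: le_trans (_ : \sum_(n <= k < m) ((t * a k ^+ 2 + u k ^+ 2 / t) / 2) <= _).
  apply: ler_sum => k _; apply: le_trans (hc k) _; exact: amgm.
rewrite -mulr_suml big_split /= -mulr_sumr -mulr_suml.
rewrite -!sub_series_geq //.
have h1 : series (fun k => a k ^+ 2) m - series (fun k => a k ^+ 2) n <= 1.
  apply: le_trans la1; apply: le_trans (series_le_lim _ ca m).
    rewrite lerBlDr lerDl; apply: sumr_ge0 => k _; exact: sqr_ge0.
  by move=> k; exact: sqr_ge0.
have h2 : series (fun k => u k ^+ 2) m - series (fun k => u k ^+ 2) n <=
    limn (series (fun k => u k ^+ 2)) - series (fun k => u k ^+ 2) n.
  by rewrite lerD2r; apply: series_le_lim => // k; exact: sqr_ge0.
have t2 : 0 < 2 * t by rewrite mulr_gt0.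
set DA := series (fun k => a k ^+ 2) m - series (fun k => a k ^+ 2) n in h1 *.
set DU := series (fun k => u k ^+ 2) m - series (fun k => u k ^+ 2) n in h2 *.
set E := limn (series (fun k => u k ^+ 2)) - series (fun k => u k ^+ 2) n in h2 *.
have tn : t != 0 by rewrite gt_eqF.
have k1 := ler_wpM2l (ltW t0) h1.
have ti : 0 <= t^-1 by rewrite invr_ge0 ltW.
have k2 := ler_wpM2r ti h2.
rewrite (_ : E / (2 * t) = (E / t) / 2); last by field.
rewrite mulr1 in k1.
lra.
Unshelve. all: by end_near.
Qed.

Lemma ptws_cvg (T : Type) (F : set_system {ptws T -> R}) (g : {ptws T -> R}) :
  Filter F -> (forall t, (fun f : T -> R => f t) @ F --> g t) -> F --> g.
Proof.
move=> FF h; apply/cvg_sup => t; apply/cvg_image => //.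
  by rewrite eqEsubset; split => // r _; exists (fun _ => r).
move=> B /(h t) FB; exists ((fun f : T -> R => f t) @^-1` B) => //.
rewrite image_preimage //.
by rewrite eqEsubset; split => // r _; exists (fun _ => r).
Qed.

Lemma lim_abs_le (T : Type) (F : set_system T) {FF : ProperFilter F}
  (g : T -> R) l B : g @ F --> l -> (\forall t \near F, `|g t| <= B) -> `|l| <= B.
Proof. by move=> /cvg_norm h hb; apply: (cvgr_to_le h). Qed.

Lemma lim_in (T : Type) (F : set_system T) {FF : ProperFilter F}
  (g : T -> R) l a b : g @ F --> l -> (\forall t \near F, a <= g t <= b) -> a <= l <= b.
Proof.
move=> h hb; apply/andP; split.
  by apply: (cvgr_to_ge h); apply: filterS hb => t /andP[].
by apply: (cvgr_to_le h); apply: filterS hb => t /andP[].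
Qed.

Lemma cvg_seriesF (T : Type) (F : set_system T) {FF : Filter F}
  (h : T -> nat -> R) (l : nat -> R) :
  (forall k, (fun t => h t k) @ F --> l k) ->
  forall n, (fun t => series (h t) n) @ F --> series l n.
Proof.
move=> hk; elim=> [|n IH].
  have -> : (fun t => series (h t) 0) = (fun _ => 0).
    by apply/funext => t; rewrite seriesEnat /= big_geq.
  by rewrite seriesEnat /= big_geq //; exact: cvg_cst.
have -> : (fun t => series (h t) n.+1) = (fun t => series (h t) n + h t n).
  by apply/funext => t; rewrite seriesSr.
rewrite seriesSr; exact: cvgD.
Qed.

Lemma four_bound (e x1 x2 L1 L2 S1 S2 : R) :
  `|x1 - x2| <= e / 4 -> `|L1 - S1| <= e / 4 -> `|L2 - S2| <= e / 4 ->
  `|S1 - S2| <= e / 4 -> `|x1 + L1 - (x2 + L2)| <= e.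
Proof.
rewrite !ler_norml => /andP[a1 a2] /andP[b1 b2] /andP[c1 c2] /andP[d1 d2].
apply/andP; split; lra.
Qed.
End Gen.

Section Main.
Variables (R : realType) (X : completeNormedModType R)
  (Y : nat -> completeNormedModType R) (N : forall k, X -> Y k -> R).
Hypothesis HN : l2sum_norms N.

Definition PT := ((X -> R) * (forall k, Y k -> R) * (nat -> R))%type.

Definition good (p : PT) : Prop :=
  [/\ is_dual p.1.1, (forall k, is_dual (p.1.2 k)),
      (forall k, dual_norm_le1 N p.1.1 (p.1.2 k)),
      (forall k, 0 <= p.2 k <= 1) /\ cvgn (series (fun k => p.2 k ^+ 2)) /\
        limn (series (fun k => p.2 k ^+ 2)) <= 1 & True].

Definition cseq (p : PT) (z : Sigma X Y) k : R := p.2 k * p.1.2 k (sig_y z k).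
Definition fnp (p : PT) (z : Sigma X Y) : R :=
  p.1.1 (sig_x z) + limn (series (cseq p z)).

Lemma LambdaE f : Lambda N f <-> exists p, good p /\ f = fnp p.
Proof.
split.
  by case=> xs [ys [al [h1 h2 h3 h4 ->]]]; exists (xs, ys, al).
by case=> [[[xs ys] al] [[h1 h2 h3 h4 _] ->]]; exists xs, ys, al.
Qed.

Lemma good_xs p : good p -> forall x, `|p.1.1 x| <= `|x|.
Proof.
case=> hx hy hd _ _ x; have := hd 0%N x 0.
rewrite (@lin0 _ _ _ (hy 0%N).1) addr0.
by case: (HN 0%N) => _ _ _ [-> _ _].
Qed.

Lemma good_ys p : good p -> forall k y, `|p.1.2 k y| <= `|y|.
Proof.
case=> hx hy hd _ _ k y; have := hd k 0 y.
rewrite (@lin0 _ _ _ hx.1) add0r.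
by case: (HN k) => _ _ _ [_ -> _].
Qed.

Lemma good_c p z : good p -> forall k, `|cseq p z k| <= p.2 k * `|sig_y z k|.
Proof.
move=> gp k; have [_ _ _ [hb _] _] := gp.
have /andP[a0 _] := hb k.
rewrite /cseq normrM ger0_norm //; apply: ler_wpM2l => //; exact: good_ys.
Qed.

Lemma good_tail p z : good p ->
  cvgn (series (cseq p z)) /\ forall n t, 0 < t ->
   `|limn (series (cseq p z)) - series (cseq p z) n| <=
     t / 2 + (limn (series (fun k => `|sig_y z k| ^+ 2))
              - series (fun k => `|sig_y z k| ^+ 2) n) / (2 * t).
Proof.
move=> gp; have [_ _ _ [hb [ca la]] _] := gp.
apply: (tail_bound _ ca la _ _ (@good_c p z gp)).
- by move=> k; have /andP[] := hb k.
- by move=> k.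
- exact: (proj2_sig z).
Qed.

Lemma part1 : Lambda N `<=` sigma_dual N.
Proof.
move=> f /LambdaE [p [gp ->]]; split.
  move=> a z1 z2 z3 [ex ey]; rewrite /fnp ex.
  have [hx hy _ _ _] := gp; rewrite hx.1.
  have e : series (cseq p z3) =
      (fun n => a * series (cseq p z1) n + series (cseq p z2) n).
    apply/funext => n; rewrite !seriesEnat /= mulr_sumr -big_split /=.
    by apply: eq_bigr => k _; rewrite /cseq ey (hy k).1; ring.
  have c1 := (good_tail z1 gp).1; have c2 := (good_tail z2 gp).1.
  have -> : limn (series (cseq p z3)) =
      a * limn (series (cseq p z1)) + limn (series (cseq p z2)).
    apply: cvg_lim => //; rewrite e; apply: cvgD => //; exact: cvgMl_tmp.
  ring.
exists 1 => z; rewrite mul1r.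
apply: sup_upper_bound; last by exists (fnp p) => //; apply/LambdaE; exists p.
split; first by exists `|fnp p z|, (fnp p) => //; apply/LambdaE; exists p.
exists (`|sig_x z| + (1 / 2 + limn (series (fun k => `|sig_y z k| ^+ 2)) / 2)).
move=> _ [g /LambdaE [q [gq ->]] <-].
have [_ tq] := good_tail z gq.
have := tq 0%N 1 ltr01.
rewrite !seriesEnat /= !big_geq // !subr0 mulr1.
move=> hl; rewrite /fnp; apply: le_trans (ler_normD _ _) _.
apply: lerD => //; exact: good_xs.
Qed.


Lemma part2 : compact (Lambda N : set {ptws Sigma X Y -> R}).
Proof.
rewrite compact_ultra => F UF FL.
have FF : ProperFilter F := @ultra_proper _ _ UF.
have [pick hpick] : {pick : (Sigma X Y -> R) -> PT &
    forall f, Lambda N f -> good (pick f) /\ f = fnp (pick f)}.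
  apply: (@boolp.choice (Sigma X Y -> R) PT (fun (f : Sigma X Y -> R) (p : PT) =>
    Lambda N f -> good p /\ f = fnp p)) => f. case: (pselect (Lambda N f)) => [/LambdaE [p hp]|nf]; first by exists p.
  by exists ((fun _ => 0), (fun _ _ => 0), (fun _ => 0)).
have FP : \forall f \near F, good (pick f) /\ f = fnp (pick f).
  by apply: filterS FL => f /hpick.
have Fg : \forall f \near F, good (pick f) by apply: filterS FP => f [].
have cx : forall x, cvg ((fun f => (pick f).1.1 x) @ F).
  move=> x; apply: (@ultra_bnd_cvg _ _ F _ (- `|x|) `|x|) => //.
  by apply: filterS Fg => f gf /=; rewrite -ler_norml; exact: good_xs.
have cy : forall k y, cvg ((fun f => (pick f).1.2 k y) @ F).
  move=> k y; apply: (@ultra_bnd_cvg _ _ F _ (- `|y|) `|y|) => //.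
  by apply: filterS Fg => f gf /=; rewrite -ler_norml; exact: good_ys.
have ca : forall k, cvg ((fun f => (pick f).2 k) @ F).
  move=> k; apply: (@ultra_bnd_cvg _ _ F _ 0 1) => //.
  by apply: filterS Fg => f [_ _ _ [hb _] _]; exact: hb.
pose xs := fun x => lim ((fun f => (pick f).1.1 x) @ F).
pose ys := fun k y => lim ((fun f => (pick f).1.2 k y) @ F).
pose al := fun k => lim ((fun f => (pick f).2 k) @ F).
pose p : PT := (xs, ys, al).
have hal : forall k, (fun f => (pick f).2 k ^+ 2) @ F --> al k ^+ 2.
  move=> k; have -> : (fun f => (pick f).2 k ^+ 2) =
     (fun f => (pick f).2 k) \* (fun f => (pick f).2 k).
    by apply/funext => f; rewrite /= expr2.
  by rewrite expr2; apply: cvgM; exact: ca.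
have ps : forall n, series (fun k => al k ^+ 2) n <= 1.
  move=> n; apply: (@cvgr_to_le _ F _ R
     (fun f => series (fun k => (pick f).2 k ^+ 2) n)).
    exact: (@cvg_seriesF _ _ F _ (fun f k => (pick f).2 k ^+ 2) (fun k => al k ^+ 2) hal n).
  apply: filterS Fg => f [_ _ _ [_ [c1 l1]] _].
  apply: le_trans l1; apply: series_le_lim => // k; exact: sqr_ge0.
have gp : good p.
  have lx : islin xs.
    move=> a u v; apply: cvg_lim => //.
    apply: (@cvg_trans _ ((fun f => a * (pick f).1.1 u + (pick f).1.1 v) @ F)).
      apply: near_eq_cvg; apply: filterS Fg => f [hx _ _ _ _] /=.
      by rewrite hx.1.
    by apply: cvgD; [apply: cvgMl_tmp|]; exact: cx.
  have ly : forall k, islin (ys k).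
    move=> k a u v; apply: cvg_lim => //.
    apply: (@cvg_trans _ ((fun f => a * (pick f).1.2 k u + (pick f).1.2 k v) @ F)).
      apply: near_eq_cvg; apply: filterS Fg => f [_ hy _ _ _] /=.
      by rewrite (hy k).1.
    by apply: cvgD; [apply: cvgMl_tmp|]; exact: cy.
  split => //.
  - split => //; apply: lin_cont => // u.
    apply: (lim_abs_le (cx u)); apply: filterS Fg => f gf; exact: good_xs.
  - move=> k; split; first exact: ly.
    apply: lin_cont => // u.
    apply: (lim_abs_le (cy k u)); apply: filterS Fg => f gf; exact: good_ys.
  - move=> k x y; apply: (lim_abs_le (cvgD (cx x) (cy k y))).
    by apply: filterS Fg => f [_ _ hd _ _]; exact: hd.
  - split.
      move=> k /=; apply/andP; split;
        [apply: (cvgr_to_ge (ca k)) | apply: (cvgr_to_le (ca k))];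
        by apply: filterS Fg => f [_ _ _ [hb _] _]; have /andP[] := hb k.
    have cs : cvgn (series (fun k => al k ^+ 2)).
      apply: nondecreasing_is_cvgn.
        by apply/nondecreasing_seqP => n; apply: series_mono => // k; exact: sqr_ge0.
      by exists 1 => _ [n _ <-]; exact: ps.
    split => //; apply: limr_le => //; exact: nearW.
exists (fnp p); split; first by apply/LambdaE; exists p.
apply: ptws_cvg => z.
apply/cvgrPdist_le => e e0.
have cu : cvgn (series (fun k => `|sig_y z k| ^+ 2)) := proj2_sig z.
pose d := e * e / 16.
have d0 : 0 < d by rewrite /d; apply: divr_gt0; [exact: mulr_gt0|].
have e4 : 0 < e / 4 by apply: divr_gt0.
have [n hn] : exists n, `|limn (series (fun k => `|sig_y z k| ^+ 2))
     - series (fun k => `|sig_y z k| ^+ 2) n| <= d.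
  apply: (@filter_ex _ \oo _).
  exact: (@cvgr_dist_le _ _ _ _ _ (series (fun k => `|sig_y z k| ^+ 2)) _ cu d d0).
have tl : forall q, good q ->
    `|limn (series (cseq q z)) - series (cseq q z) n| <= e / 4.
  move=> q gq; have [_ tq] := good_tail z gq.
  apply: le_trans (tq n (e / 4) e4) _.
  have hD := le_trans (ler_norm _) hn.
  have i0 : 0 <= (2 * (e / 4))^-1 by rewrite invr_ge0 ltW // mulr_gt0.
  have k := ler_wpM2r i0 hD.
  have en : e != 0 by rewrite gt_eqF.
  rewrite (_ : d / (2 * (e / 4)) = e / 8) in k; last by rewrite /d; field.
  lra.
have hx : \forall f \near F, `|p.1.1 (sig_x z) - (pick f).1.1 (sig_x z)| <= e / 4.
  exact: (@cvgr_dist_le _ _ _ F _ (fun f => (pick f).1.1 (sig_x z)) _ (cx (sig_x z)) _ e4).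
have hk : forall k, (fun f => cseq (pick f) z k) @ F --> cseq p z k.
  move=> k; exact: (cvgM (ca k) (cy k (sig_y z k))).
have hs : \forall f \near F,
    `|series (cseq p z) n - series (cseq (pick f) z) n| <= e / 4.
  have := @cvgr_dist_le _ _ _ F _ (fun f => series (cseq (pick f) z) n)
    (series (cseq p z) n)
    (@cvg_seriesF _ _ F _ (fun f k => cseq (pick f) z k) (cseq p z) hk n) _ e4.
  by move=> h; exact: h.
near=> f.
have [gf ef] : good (pick f) /\ f = fnp (pick f) by near: f.
have h1 : `|p.1.1 (sig_x z) - (pick f).1.1 (sig_x z)| <= e / 4 by near: f.
have h2 : `|series (cseq p z) n - series (cseq (pick f) z) n| <= e / 4 by near: f.
rewrite ef /fnp.
exact: (four_bound h1 (tl p gp) (tl _ gf) h2).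
Unshelve. all: by end_near.
Qed.

Theorem lemma2p5_sec : Lambda N `<=` sigma_dual N /\
  compact (Lambda N : set {ptws Sigma X Y -> R}).
Proof. split; [exact: part1 | exact: part2]. Qed.

End Main.

(* Lambda lies in the dual of Sigma and is compact for the weak* topology,
   i.e. the topology of pointwise convergence on Sigma. *)
Theorem lemma2p5 (R : realType) (X : completeNormedModType R)
    (Y : nat -> completeNormedModType R) (N : forall k, X -> Y k -> R)
    (HN : l2sum_norms N) :
  Lambda N `<=` sigma_dual N /\
  compact (Lambda N : set {ptws Sigma X Y -> R}).
Proof. exact: (@lemma2p5_sec R X Y N HN). Qed.
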